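(* Let $\beta\in(0,1/2)$, $N=2^n$, $\delta_N=2^{-N^\beta}$. Let $(U,V,X,Z)$ be random variables with $U,V\in\{0,1\}$ and $X,Z$ taking values in finite alphabets $\mathcal X,\mathcal Z$, and let $P=P_{U^NV^NX^NZ^N}$ be the distribution of $N$ i.i.d. copies of $(U,V,X,Z)$. Put $T^N=V^NG_N$ and $$\mathcal H_{V|U,Z}=\{i\in[N]:\ Z(T_i\mid T^{i-1},U^N,Z^N)\ge 1-\delta_N\},$$ computed under $P$. Let $Q$ be any distribution on $\{0,1\}^N\times\{0,1\}^N\times\mathcal X^N\times\mathcal Z^N$ of $(U^N,V^N,X^N,Z^N)$ with $\|P-Q\|_1\le 2N2^{-N^\beta}$, and under $Q$ set $T^N=V^NG_N$. Let $\mathcal I\subseteq\mathcal H_{V|U,Z}$ and $\mathcal A\subseteq\mathcal I$, and write $T[\mathcal S]=(T_i)_{i\in\mathcal S}$. Then, with mutual information computed under $Q$, $$I\big(T[\mathcal I\setminus\mathcal A];\,T[\mathcal A],U^N,Z^N\big)=O\big(N^3 2^{-N^\beta}\big),$$ with implied constant depending only on $|\mathcal Z|$ (for all sufficiently large $N$).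
   Context: $G_N=B_NF^{\otimes n}$ is Arıkan's polarizing matrix over $\mathbb F_2$: $F=\begin{pmatrix}1&0\\1&1\end{pmatrix}$, $\otimes$ is the Kronecker product and $B_N$ is the bit-reversal permutation matrix. For a binary random variable $A$ and a discrete random variable $B$, $Z(A\mid B)=2\sum_b P_B(b)\sqrt{P_{A|B}(0|b)P_{A|B}(1|b)}$. $T^{i-1}=(T_1,\dots,T_{i-1})$, $[N]=\{1,\dots,N\}$, $\|\cdot\|_1$ is the $\ell_1$ distance between distributions, logarithms are base 2. *)

(* Defs.v *)
From Stdlib Require Import Reals.
From mathcomp Require Import all_boot.
Local Open Scope R_scope.

Set Implicit Arguments.
Unset Strict Implicit.
Unset Printing Implicit Defensive.

Definition is_dist (W : finType) (p : W -> R) : Prop :=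
  (forall w, (0 <= p w)) /\ \big[Rplus/R0]_(w : W) p w = R1.

Definition prob (W : finType) (p : W -> R) (E : pred W) : R :=
  \big[Rplus/R0]_(w : W | E w) p w.

Definition img (W : finType) (B : eqType) (f : W -> B) : seq B :=
  undup [seq f w | w <- enum W].

Definition log2 (x : R) : R := (ln x / ln 2).

(* Bhattacharyya parameter
   Z(A|B) = 2 sum_b P_B(b) sqrt(P_{A|B}(0|b) P_{A|B}(1|b)),  0 <-> false. *)
Definition Bhatt (W : finType) (p : W -> R) (B : eqType)
    (A : W -> bool) (Bv : W -> B) : R :=
  (2 * \big[Rplus/R0]_(b <- img Bv)
        (let pb := prob p (fun w => Bv w == b) in
         pb * sqrt ((prob p (fun w => (A w == false) && (Bv w == b)) / pb)
                  * (prob p (fun w => (A w == true) && (Bv w == b)) / pb)))).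

(* mutual information (base-2 logs, 0 log 0 = 0) *)
Definition MI (W : finType) (p : W -> R) (A B : eqType)
    (Av : W -> A) (Bv : W -> B) : R :=
  \big[Rplus/R0]_(a <- img Av) \big[Rplus/R0]_(b <- img Bv)
    (let j := prob p (fun w => (Av w == a) && (Bv w == b)) in
     if Req_EM_T j 0 then R0
     else (j * log2 (j / (prob p (fun w => Av w == a)
                          * prob p (fun w => Bv w == b))))).

Definition l1dist (W : finType) (p q : W -> R) : R :=
  \big[Rplus/R0]_(w : W) Rabs (p w - q w).

(* Arikan's matrix G_N = B_N F^{(x)n} over F_2 (entries as bools,      *)
(* F_2 addition = xorb, multiplication = andb).  Indices 0..N-1.       *)

Definition Fentry (a b : nat) : bool :=
  match a, b with
  | 0, 0 => true | 0, 1 => false | 1, 0 => true | 1, 1 => true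
  | _, _ => false
  end.

(* F^{(x)(m+1)} = F (x) F^{(x)m}: entry ((a,i'),(b,j')) with index
   a * 2^m + i' is F_{ab} * (F^{(x)m})_{i'j'} *)
Fixpoint Fkron (n i j : nat) : bool :=
  match n with
  | 0 => true
  | m.+1 => Fentry (i %/ 2 ^ m)%N (j %/ 2 ^ m)%N && Fkron m (i %% 2 ^ m)%N (j %% 2 ^ m)%N
  end.

Fixpoint bitrev (n i : nat) : nat :=
  match n with
  | 0 => 0
  | m.+1 => ((i %% 2) * 2 ^ m + bitrev m (i %/ 2))%N
  end.

Definition Bmat (n i k : nat) : bool := k == bitrev n i.

Definition Gmat (n : nat) (i j : 'I_(2 ^ n)) : bool :=
  \big[xorb/false]_(k < 2 ^ n) (Bmat n i k && Fkron n k j).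

Definition polar (n : nat) (v : {ffun 'I_(2 ^ n) -> bool}) : {ffun 'I_(2 ^ n) -> bool} :=
  [ffun j => \big[xorb/false]_(i < 2 ^ n) (v i && Gmat i j)].

Definition Omega (n : nat) (X Z : finType) : finType :=
  ({ffun 'I_(2 ^ n) -> bool} * {ffun 'I_(2 ^ n) -> bool}
   * {ffun 'I_(2 ^ n) -> X} * {ffun 'I_(2 ^ n) -> Z})%type.

Definition Useq n (X Z : finType) (w : Omega n X Z) := w.1.1.1.
Definition Vseq n (X Z : finType) (w : Omega n X Z) := w.1.1.2.
Definition Xseq n (X Z : finType) (w : Omega n X Z) := w.1.2.
Definition Zseq n (X Z : finType) (w : Omega n X Z) := w.2.

Definition Tseq n (X Z : finType) (w : Omega n X Z) := polar (Vseq w).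

(* T^{i-1} (1-based) = (T_j)_{j < i} (0-based) as a list *)
Definition Tpast n (X Z : finType) (i : 'I_(2 ^ n)) (w : Omega n X Z) : seq bool :=
  [seq Tseq w j | j <- [seq j : 'I_(2 ^ n) <- enum 'I_(2 ^ n) | (j < i)%N]].

Definition Tsub n (X Z : finType) (S : {set 'I_(2 ^ n)}) (w : Omega n X Z) : seq bool :=
  [seq Tseq w j | j <- enum S].

Definition iid n (X Z : finType) (P0 : (bool * bool * X * Z)%type -> R)
    (w : Omega n X Z) : R :=
  \big[Rmult/R1]_(i < 2 ^ n)
     P0 (Useq w i, Vseq w i, Xseq w i, Zseq w i).

Definition deltaN (n : nat) (beta : R) : R :=
  Rpower 2 (- Rpower (INR (2 ^ n)) beta).

Definition Hset n (X Z : finType) (beta : R) (P0 : (bool * bool * X * Z)%type -> R)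
    : {set 'I_(2 ^ n)} :=
  [set i : 'I_(2 ^ n) |
     Rle_dec (1 - deltaN n beta)
             (Bhatt (iid (n:=n) P0) (fun w => Tseq w i)
                    (fun w => (Tpast i w, Useq w, Zseq w)))].

(* Main.v *)
From HB Require Import structures.
Require Import Defs.
From Stdlib Require Import Reals Lra FunctionalExtensionality.
From mathcomp Require Import all_boot.
Local Open Scope R_scope.
Set Implicit Arguments. Unset Strict Implicit. Unset Printing Implicit Defensive.

Lemma RplusA : associative Rplus. Proof. move=> *; ring. Qed.
Lemma RmultA : associative Rmult. Proof. move=> *; ring. Qed.
Lemma Rplus0l : left_id R0 Rplus. Proof. move=> *; ring. Qed.
Lemma Rmult1l : left_id R1 Rmult. Proof. move=> *; ring. Qed.
HB.instance Definition _ := Monoid.isComLaw.Build R R0 Rplus RplusA Rplus_comm Rplus0l.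
HB.instance Definition _ := Monoid.isComLaw.Build R R1 Rmult RmultA Rmult_comm Rmult1l.
HB.instance Definition _ := Monoid.isMulLaw.Build R R0 Rmult Rmult_0_l Rmult_0_r.
HB.instance Definition _ := Monoid.isAddLaw.Build R Rmult Rplus Rmult_plus_distr_r Rmult_plus_distr_l.

Lemma sumR_le (I : Type) (r : seq I) (P : pred I) (F G : I -> R) :
  (forall i, P i -> F i <= G i) ->
  \big[Rplus/R0]_(i <- r | P i) F i <= \big[Rplus/R0]_(i <- r | P i) G i.
Proof. move=> H; apply: (big_ind2 Rle); [lra | move=> *; lra | exact H]. Qed.

Lemma sumR_ge0 (I : Type) (r : seq I) (P : pred I) (F : I -> R) :
  (forall i, P i -> 0 <= F i) -> 0 <= \big[Rplus/R0]_(i <- r | P i) F i.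
Proof. move=> H; apply: (big_ind (fun x => 0 <= x)); [lra | move=> *; lra | exact H]. Qed.

Lemma sumR_split (I : Type) (r : seq I) (P : pred I) (F G : I -> R) :
  \big[Rplus/R0]_(i <- r | P i) (F i + G i) =
  \big[Rplus/R0]_(i <- r | P i) F i + \big[Rplus/R0]_(i <- r | P i) G i.
Proof. exact: big_split. Qed.

Lemma sumR_distrl (I : Type) (r : seq I) (P : pred I) (F : I -> R) a :
  \big[Rplus/R0]_(i <- r | P i) F i * a = \big[Rplus/R0]_(i <- r | P i) (F i * a).
Proof. exact: big_distrl. Qed.

Lemma sumR_distrr (I : Type) (r : seq I) (P : pred I) (F : I -> R) a :
  a * \big[Rplus/R0]_(i <- r | P i) F i = \big[Rplus/R0]_(i <- r | P i) (a * F i).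
Proof. exact: big_distrr. Qed.

Lemma sum_if1 (T : eqType) (s : seq T) a (c : R) : uniq s -> a \in s ->
  \big[Rplus/R0]_(x <- s) (if a == x then c else R0) = c.
Proof.
elim: s => //= y s IH /andP[ys us]; rewrite inE big_cons => /orP[/eqP ->| as_].
  rewrite eqxx big_seq big1 /=; first lra.
  by move=> x xs; case: eqP => // e; move: ys; rewrite e xs.
have ->: (a == y) = false by apply/eqP => e; move: as_; rewrite e (negbTE ys).
rewrite IH //; lra.
Qed.

Section Gen.
Variables (W : finType) (mu : W -> R).
Hypothesis mu_ge0 : forall w, 0 <= mu w.

Definition pr (K : eqType) (k : W -> K) (x : K) := prob mu (fun v => k v == x).

Lemma img_uniq (K : eqType) (k : W -> K) : uniq (img k).
Proof. exact: undup_uniq. Qed.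

Lemma img_mem (K : eqType) (k : W -> K) w : k w \in img k.
Proof. by rewrite /img mem_undup; apply: map_f; rewrite mem_enum. Qed.

Lemma pr_ge0 (K : eqType) (k : W -> K) x : 0 <= pr k x.
Proof. by apply: sumR_ge0. Qed.

Lemma prob_ge0 (E : pred W) : 0 <= prob mu E.
Proof. by apply: sumR_ge0. Qed.

Lemma mu_le_prob (E : pred W) w : E w -> mu w <= prob mu E.
Proof.
move=> Ew; rewrite /prob (bigD1 w) //=.
have := @sumR_ge0 _ (index_enum W) (fun i => E i && (i != w)) mu (fun i _ => mu_ge0 i).
lra.
Qed.

Lemma mu_le_pr (K : eqType) (k : W -> K) w : mu w <= pr k (k w).
Proof. by apply: mu_le_prob. Qed.

Lemma Part (K : eqType) (k : W -> K) (F : K -> R) :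
  \big[Rplus/R0]_(w : W) (mu w * F (k w)) =
  \big[Rplus/R0]_(x <- img k) (pr k x * F x).
Proof.
transitivity (\big[Rplus/R0]_(x <- img k) \big[Rplus/R0]_(w : W)
     (if k w == x then mu w * F (k w) else R0)); last first.
  apply: eq_bigr => x _; rewrite /pr /prob sumR_distrl [RHS]big_mkcond /=.
  by apply: eq_bigr => w _; case: eqP => // ->.
rewrite exchange_big; apply: eq_bigr => w _.
by rewrite sum_if1 // ?img_uniq ?img_mem.
Qed.

Lemma Tower (K : eqType) (k : W -> K) (h : W -> R) :
  \big[Rplus/R0]_(w : W) (mu w * h w) =
  \big[Rplus/R0]_(w : W) (mu w * \big[Rplus/R0]_(v : W)
       (if k v == k w then mu v * h v else R0) / pr k (k w)).
Proof.
transitivity (\big[Rplus/R0]_(w : W) \big[Rplus/R0]_(v : W)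
       (if k v == k w then mu w * (mu v * h v / pr k (k v)) else R0)); last first.
  apply: eq_bigr => w _; rewrite /Rdiv Rmult_assoc sumR_distrl sumR_distrr.
  by apply: eq_bigr => v _; case: eqP => [->|_]; rewrite /Rdiv; ring.
rewrite exchange_big; apply: eq_bigr => v _.
transitivity (\big[Rplus/R0]_(w : W) (if k w == k v then mu w else R0) *
              (mu v * h v / pr k (k v))).
  have e : \big[Rplus/R0]_(w : W) (if k w == k v then mu w else R0) = pr k (k v).
    by rewrite /pr /prob [RHS]big_mkcond.
  rewrite e; have := mu_le_pr k v; have := mu_ge0 v.
  case: (Req_EM_T (pr k (k v)) 0) => [->|ne] *.
    have -> : mu v = 0 by lra.
    ring.
  by field.
rewrite sumR_distrl; apply: eq_bigr => w _; rewrite eq_sym.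
by case: ifP => _; ring.
Qed.

End Gen.

Lemma ln_le_sub1 x : 0 < x -> ln x <= x - 1.
Proof. move=> x0; have := exp_ineq1_le (ln x); rewrite exp_ln //; lra. Qed.

Lemma ln_le_mono x y : 0 < x -> x <= y -> ln x <= ln y.
Proof.
move=> x0 [xy|->]; last lra.
by apply: Rlt_le; apply: ln_increasing.
Qed.

Lemma ln_div x y : 0 < x -> 0 < y -> ln (x / y) = ln x - ln y.
Proof.
move=> x0 y0; have iy : 0 < / y by apply: Rinv_0_lt_compat.
by rewrite /Rdiv ln_mult // ln_Rinv.
Qed.

Lemma INR_expn2 k : INR (2 ^ k)%N = 2 ^ k.
Proof. elim: k => [|k IH] //=; rewrite expnS mult_INR IH /=; lra. Qed.

Lemma Rinv_ge0 x : 0 <= x -> 0 <= / x.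
Proof. case=> [h|<-]; first by apply: Rlt_le; apply: Rinv_0_lt_compat. rewrite Rinv_0; lra. Qed.

Lemma count_bound (G : eqType) kk (s : seq (seq bool * G)) (c : G) :
  uniq s -> (forall x, x \in s -> size x.1 = kk) ->
  \big[Rplus/R0]_(x <- s) (if c == x.2 then R1 else R0) <= 2 ^ kk.
Proof.
move=> us sz.
have -> : \big[Rplus/R0]_(x <- s) (if c == x.2 then R1 else R0) =
          INR (count (fun x => c == x.2) s).
  elim: (s) => [|a t IH]; first by rewrite big_nil.
  rewrite big_cons IH /= plus_INR; case: (c == a.2) => /=; lra.
rewrite -size_filter.
set f := filter _ s.
have uf : uniq f by apply: filter_uniq.
have uf1 : uniq (map fst f).
  rewrite map_inj_in_uniq // => x y; rewrite !mem_filter.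
  case: x y => [x1 x2] [y1 y2] /andP[/eqP cx _] /andP[/eqP cy _] /= e.
  by rewrite /= in cx cy; rewrite e -cx -cy.
have sub : {subset map fst f <= map val (enum {: kk.-tuple bool})}.
  move=> z /mapP[x]; rewrite mem_filter => /andP[_ xs] ->.
  have hs : size x.1 == kk by rewrite sz.
  by apply/mapP; exists (Tuple hs); rewrite ?mem_enum.
have := uniq_leq_size uf1 sub; rewrite !size_map -enumT -cardT card_tuple card_bool.
move/leP/le_INR; rewrite INR_expn2; lra.
Qed.

Section Gen2.
Variable W : finType.
Implicit Types mu nu : W -> R.

Lemma sum_mu_le mu (F G : W -> R) : (forall w, 0 <= mu w) ->
  (forall w, 0 < mu w -> F w <= G w) ->
  \big[Rplus/R0]_(w : W) (mu w * F w) <= \big[Rplus/R0]_(w : W) (mu w * G w).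
Proof.
move=> h0 h; apply: sumR_le => w _; have := h0 w; case=> [p|<-]; last lra.
by apply: Rmult_le_compat_l; [lra | apply: h].
Qed.

Lemma Gibbs mu (f : W -> R) : (forall w, 0 <= mu w) ->
  (forall w, 0 < mu w -> 0 < f w) ->
  \big[Rplus/R0]_(w : W) (mu w * ln (f w)) <=
  \big[Rplus/R0]_(w : W) (mu w * (f w - 1)).
Proof. move=> h0 h; apply: sum_mu_le => // w /h; exact: ln_le_sub1. Qed.

Lemma G1 mu nu (K : eqType) (k : W -> K) :
  (forall w, 0 <= nu w) ->
  \big[Rplus/R0]_(w : W) (mu w * (pr nu k (k w) / pr mu k (k w))) <=
  \big[Rplus/R0]_(w : W) nu w.
Proof.
move=> hn; rewrite (Part mu k (fun x => pr nu k x / pr mu k x)).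
have -> : \big[Rplus/R0]_(w : W) nu w = \big[Rplus/R0]_(w : W) (nu w * 1).
  by apply: eq_bigr => w _; ring.
rewrite (Part nu k (fun _ => 1)); apply: sumR_le => x _.
have := pr_ge0 hn k x.
case: (Req_EM_T (pr mu k x) 0) => [->|ne] h; rewrite /Rdiv.
  lra.
by rewrite Rmult_comm Rmult_assoc Rinv_l //; lra.
Qed.

Lemma Cells mu nu (K : eqType) (k : W -> K) (G : K -> R) :
  (forall w, 0 <= mu w) -> (forall w, mu w <= nu w) -> (forall x, 0 <= G x) ->
  \big[Rplus/R0]_(w : W) (mu w * (G (k w) / pr mu k (k w))) <=
  \big[Rplus/R0]_(w : W) (nu w * (G (k w) / pr nu k (k w))).
Proof.
move=> hm hmn hG.
have hn : forall w, 0 <= nu w by move=> w; have := hm w; have := hmn w; lra.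
rewrite (Part mu k (fun x => G x / pr mu k x)) (Part nu k (fun x => G x / pr nu k x)).
apply: sumR_le => x _.
have le : pr mu k x <= pr nu k x by apply: sumR_le.
have := pr_ge0 hm k x; have := hG x.
case: (Req_EM_T (pr mu k x) 0) => [e|ne] h1 h2; rewrite /Rdiv.
  rewrite e Rmult_0_l; apply: Rmult_le_pos; first by apply: pr_ge0.
  apply: Rmult_le_pos => //; apply: Rinv_ge0; lra.
have ne2 : pr nu k x <> 0 by lra.
by rewrite !(Rmult_comm (pr _ _ _)) !Rmult_assoc !Rinv_l //; lra.
Qed.

Lemma Count mu (G : eqType) (y : W -> seq bool) (g : W -> G) kk :
  (forall w, 0 <= mu w) -> (forall w, size (y w) = kk) ->
  \big[Rplus/R0]_(w : W) (mu w * (pr mu g (g w) /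
       pr mu (fun v => (y v, g v)) (y w, g w))) <=
  2 ^ kk * \big[Rplus/R0]_(w : W) mu w.
Proof.
move=> hm hs.
pose yg := fun v => (y v, g v).
rewrite (Part mu yg (fun x => pr mu g x.2 / pr mu yg x)).
apply: (Rle_trans _ (\big[Rplus/R0]_(x <- img yg) pr mu g x.2)).
  apply: sumR_le => x _.
  have := pr_ge0 hm g x.2; have := pr_ge0 hm yg x.
  case: (Req_EM_T (pr mu yg x) 0) => [->|ne] h1 h2; rewrite /Rdiv.
    lra.
  by rewrite Rmult_comm Rmult_assoc Rinv_l //; lra.
have -> : \big[Rplus/R0]_(x <- img yg) pr mu g x.2 =
   \big[Rplus/R0]_(x <- img yg) \big[Rplus/R0]_(v : W)
      (mu v * (if g v == x.2 then R1 else R0)).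
  apply: eq_bigr => x _; rewrite /pr /prob big_mkcond /=.
  by apply: eq_bigr => v _; case: ifP => _; ring.
rewrite exchange_big sumR_distrr; apply: sumR_le => v _.
rewrite -sumR_distrr Rmult_comm; apply: Rmult_le_compat_r => //.
apply: count_bound; first exact: img_uniq.
move=> x; rewrite /img mem_undup => /mapP[w _ ->] /=; exact: hs.
Qed.

End Gen2.

Section Gen3.
Variable W : finType.
Implicit Types mu nu : W -> R.

Lemma prob_mono mu (E F : pred W) : (forall w, 0 <= mu w) ->
  (forall w, E w -> F w) -> prob mu E <= prob mu F.
Proof.
move=> h0 h; rewrite /prob [X in X <= _]big_mkcond [X in _ <= X]big_mkcond.
apply: sumR_le => w _; case: ifP => Ew; first by rewrite (h _ Ew); lra.
by case: ifP => _; [apply: h0| lra].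
Qed.

Lemma prob_add mu nu (E : pred W) :
  prob (fun w => mu w + nu w) E = prob mu E + prob nu E.
Proof. exact: big_split. Qed.

Lemma SplitBool mu (F : eqType) (b : W -> bool) (f : W -> F) x (H : bool -> R) :
  \big[Rplus/R0]_(v : W) (if f v == x then mu v * H (b v) else R0) =
  prob mu (fun v => (b v == false) && (f v == x)) * H false +
  prob mu (fun v => (b v == true) && (f v == x)) * H true.
Proof.
rewrite /prob !sumR_distrl [X in _ = X + _]big_mkcond [X in _ = _ + X]big_mkcond.
rewrite -big_split; apply: eq_bigr => v _ /=.
by case: (f v == x); case: (b v) => /=; ring.
Qed.

Lemma MI_eq mu (A B : eqType) (Av : W -> A) (Bv : W -> B) :
  MI mu Av Bv = \big[Rplus/R0]_(w : W) (mu w *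
    log2 (prob mu (fun v => (Av v == Av w) && (Bv v == Bv w)) /
          (prob mu (fun v => Av v == Av w) * prob mu (fun v => Bv v == Bv w)))).
Proof.
pose L a b := log2 (prob mu (fun v => (Av v == a) && (Bv v == b)) /
          (prob mu (fun v => Av v == a) * prob mu (fun v => Bv v == b))).
transitivity (\big[Rplus/R0]_(a <- img Av) \big[Rplus/R0]_(b <- img Bv)
   \big[Rplus/R0]_(w : W) (if (Av w == a) && (Bv w == b) then mu w * L (Av w) (Bv w) else R0)).
  apply: eq_bigr => a _; apply: eq_bigr => b _ /=.
  transitivity (prob mu (fun w => (Av w == a) && (Bv w == b)) * L a b).
    by case: Req_EM_T => [e|_] /=; [rewrite e; ring | ].
  rewrite /prob sumR_distrl [LHS]big_mkcond; apply: eq_bigr => w _.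
  by case: ifP => // /andP[/eqP -> /eqP ->].
rewrite (eq_bigr (fun a => \big[Rplus/R0]_(w : W) \big[Rplus/R0]_(b <- img Bv)
    (if (Av w == a) && (Bv w == b) then mu w * L (Av w) (Bv w) else R0))); last first.
  by move=> a _; rewrite exchange_big.
rewrite exchange_big; apply: eq_bigr => w _.
transitivity (\big[Rplus/R0]_(a <- img Av) (if Av w == a then mu w * L (Av w) (Bv w) else R0)); last first.
  by rewrite sum_if1 ?img_uniq ?img_mem.
apply: eq_bigr => a _; case: eqP => _ /=; first by rewrite sum_if1 ?img_uniq ?img_mem.
by rewrite big1.
Qed.

Lemma Bhatt_eq mu (F : eqType) (b : W -> bool) (f : W -> F) :
  Bhatt mu b f = 2 * \big[Rplus/R0]_(w : W) (mu w *
     sqrt (prob mu (fun v => (b v == false) && (f v == f w)) / pr mu f (f w) *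
           (prob mu (fun v => (b v == true) && (f v == f w)) / pr mu f (f w)))).
Proof.
rewrite (Part mu f (fun x => sqrt (prob mu (fun v => (b v == false) && (f v == x)) / pr mu f x *
           (prob mu (fun v => (b v == true) && (f v == x)) / pr mu f x)))).
by [].
Qed.

End Gen3.

Section JSec.
Variables (W : finType) (Y G : eqType) (y : W -> Y) (g : W -> G).
Implicit Types mu nu : W -> R.

Definition yg := fun v => (y v, g v).
Definition Aa mu w := pr mu yg (yg w).
Definition Bb mu w := pr mu g (g w).
Definition Jc mu := \big[Rplus/R0]_(w : W) (mu w * ln (Bb mu w / Aa mu w)).

Lemma sum_mu_add mu (F H : W -> R) :
  \big[Rplus/R0]_(w : W) (mu w * (F w + H w)) =
  \big[Rplus/R0]_(w : W) (mu w * F w) + \big[Rplus/R0]_(w : W) (mu w * H w).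
Proof. rewrite -big_split; apply: eq_bigr => w _ /=; ring. Qed.

Lemma sum_mu_c mu c :
  \big[Rplus/R0]_(w : W) (mu w * c) = c * \big[Rplus/R0]_(w : W) mu w.
Proof. by rewrite sumR_distrr; apply: eq_bigr => w _; ring. Qed.

Lemma sum_mu_scale mu c (F : W -> R) :
  \big[Rplus/R0]_(w : W) (mu w * (c * F w)) = c * \big[Rplus/R0]_(w : W) (mu w * F w).
Proof. by rewrite sumR_distrr; apply: eq_bigr => w _; ring. Qed.

Lemma sum_add_mu mu nu (F : W -> R) :
  \big[Rplus/R0]_(w : W) ((mu w + nu w) * F w) =
  \big[Rplus/R0]_(w : W) (mu w * F w) + \big[Rplus/R0]_(w : W) (nu w * F w).
Proof. rewrite -big_split; apply: eq_bigr => w _ /=; ring. Qed.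

Lemma Aa_pos mu w : (forall v, 0 <= mu v) -> 0 < mu w -> 0 < Aa mu w.
Proof. move=> h0 p; have := mu_le_pr h0 yg w; rewrite /Aa; lra. Qed.

Lemma Aa_le_Bb mu w : (forall v, 0 <= mu v) -> Aa mu w <= Bb mu w.
Proof. by move=> h0; apply: prob_mono => // v /eqP [_ ->]. Qed.

Lemma Bb_pos mu w : (forall v, 0 <= mu v) -> 0 < mu w -> 0 < Bb mu w.
Proof. move=> h0 p; have := Aa_pos h0 p; have := Aa_le_Bb w h0; lra. Qed.

Lemma Aa_mono mu nu w : (forall v, 0 <= mu v) -> (forall v, mu v <= nu v) -> Aa mu w <= Aa nu w.
Proof. by move=> h0 h; apply: sumR_le. Qed.

Lemma Bb_mono mu nu w : (forall v, 0 <= mu v) -> (forall v, mu v <= nu v) -> Bb mu w <= Bb nu w.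
Proof. by move=> h0 h; apply: sumR_le. Qed.

Lemma Jc_ge0 mu : (forall v, 0 <= mu v) -> 0 <= Jc mu.
Proof.
move=> h0; apply: sumR_ge0 => w _; have := h0 w; case=> [p|<-]; last lra.
apply: Rmult_le_pos; first lra.
have a0 := Aa_pos h0 p; have ab := Aa_le_Bb w h0.
rewrite -ln_1; apply: ln_le_mono; first lra.
apply: (Rmult_le_reg_r (Aa mu w)) => //; rewrite /Rdiv Rmult_assoc Rinv_l; lra.
Qed.

End JSec.

Lemma ln_split B A c : 0 < B -> 0 < A -> 0 < c -> ln (B / A) = ln (B / (c * A)) + ln c.
Proof.
move=> *; rewrite !ln_div //; last by apply: Rmult_lt_0_compat.
rewrite ln_mult //; ring.
Qed.

Lemma pow2_pos k : 0 < 2 ^ k.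
Proof. apply: pow_lt; lra. Qed.

Lemma Jc_count (W : finType) (G : eqType) (y : W -> seq bool) (g : W -> G) mu kk :
  (forall w, 0 <= mu w) -> (forall w, size (y w) = kk) ->
  Jc y g mu <= INR kk * ln 2 * \big[Rplus/R0]_(w : W) mu w.
Proof.
move=> h0 hs.
have c0 := pow2_pos kk.
apply: (Rle_trans _ (\big[Rplus/R0]_(w : W) (mu w *
   (/ 2 ^ kk * (Bb g mu w / Aa y g mu w) + (INR kk * ln 2 - 1))))).
  apply: sum_mu_le => // w p.
  have a0 := Aa_pos y g h0 p; have b0 := Bb_pos y g h0 p.
  rewrite (ln_split (c := 2 ^ kk)) // ln_pow; last lra.
  have := ln_le_sub1 (x := Bb g mu w / (2 ^ kk * Aa y g mu w)).
  have -> : Bb g mu w / (2 ^ kk * Aa y g mu w) = / 2 ^ kk * (Bb g mu w / Aa y g mu w)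
    by field; lra.
  have : 0 < / 2 ^ kk * (Bb g mu w / Aa y g mu w).
    apply: Rmult_lt_0_compat; first by apply: Rinv_0_lt_compat.
    by apply: Rdiv_lt_0_compat.
  move=> p1 /(_ p1); lra.
rewrite sum_mu_add sum_mu_scale sum_mu_c.
have h : \big[Rplus/R0]_(w : W) (mu w * (Bb g mu w / Aa y g mu w)) <=
   2 ^ kk * \big[Rplus/R0]_(w : W) mu w by exact: (@Count _ mu _ y g kk h0 hs).
have : / 2 ^ kk * \big[Rplus/R0]_(w : W) (mu w * (Bb g mu w / Aa y g mu w)) <=
       \big[Rplus/R0]_(w : W) mu w.
  apply: (Rmult_le_reg_l (2 ^ kk)) => //; rewrite -Rmult_assoc Rinv_r; lra.
lra.
Qed.

Section Mix.
Variables (W : finType) (Y G : eqType) (y : W -> Y) (g : W -> G).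
Implicit Types mu nu m : W -> R.

Lemma ln_id4 A B Am Bm : 0 < A -> 0 < B -> 0 < Am -> 0 < Bm ->
  ln (Bm / Am) = ln (B / A) + ln (A * Bm / (B * Am)).
Proof.
move=> *; rewrite !ln_div //; try by apply: Rmult_lt_0_compat.
rewrite !ln_mult //; ring.
Qed.

Lemma SA_one m mu : (forall w, 0 <= m w) -> (forall w, m w <= mu w) ->
  Jc y g m <= \big[Rplus/R0]_(w : W) (m w * ln (Bb g mu w / Aa y g mu w)) +
    \big[Rplus/R0]_(w : W) (mu w * ((pr mu (yg y g) (yg y g w) * pr m g (g w) / pr mu g (g w))
        / Aa y g mu w)) - \big[Rplus/R0]_(w : W) m w.
Proof.
move=> h0 hle.
have h0' : forall w, 0 <= mu w by move=> w; have := h0 w; have := hle w; lra.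
apply: (Rle_trans _ (\big[Rplus/R0]_(w : W) (m w * (ln (Bb g mu w / Aa y g mu w) +
   ((pr mu (yg y g) (yg y g w) * pr m g (g w) / pr mu g (g w)) / Aa y g m w) - 1)))).
  apply: sum_mu_le => // w p.
  have am := Aa_pos y g h0 p; have bm := Bb_pos y g h0 p.
  have p' : 0 < mu w by have := hle w; lra.
  have a := Aa_pos y g h0' p'; have b := Bb_pos y g h0' p'.
  rewrite (ln_id4 (A := Aa y g mu w) (B := Bb g mu w)) //.
  have r0 : 0 < Aa y g mu w * Bb g m w / (Bb g mu w * Aa y g m w).
    apply: Rdiv_lt_0_compat; apply: Rmult_lt_0_compat => //.
  have := ln_le_sub1 r0.
  have -> : pr mu (yg y g) (yg y g w) * pr m g (g w) / pr mu g (g w) / Aa y g m w =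
    Aa y g mu w * Bb g m w / (Bb g mu w * Aa y g m w).
    by rewrite /Aa /Bb /Rdiv Rinv_mult; ring.
  lra.
have e : forall F H : W -> R, \big[Rplus/R0]_(w : W) (m w * (F w + H w - 1)) =
  \big[Rplus/R0]_(w : W) (m w * F w) + \big[Rplus/R0]_(w : W) (m w * H w) -
  \big[Rplus/R0]_(w : W) m w.
  move=> F H; rewrite -sum_mu_add; have -> : forall a b : R, a - b = a + (-1) * b by move=> *; ring.
  rewrite -sum_mu_c -sum_mu_add; apply: eq_bigr => w _; ring.
rewrite e.
have := @Cells _ m mu _ (yg y g)
  (fun x => pr mu (yg y g) x * pr m g x.2 / pr mu g x.2) h0 hle.
have hG : forall x, 0 <= pr mu (yg y g) x * pr m g x.2 / pr mu g x.2.
  move=> x; apply: Rmult_le_pos; first apply: Rmult_le_pos; try apply: pr_ge0 => //.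
  by apply: Rinv_ge0; apply: pr_ge0.
move=> /(_ hG) /= h.
have : \big[Rplus/R0]_(w : W) (m w * ((pr mu (yg y g) (yg y g w) * pr m g (g w) / pr mu g (g w))
    / Aa y g m w)) <=
  \big[Rplus/R0]_(w : W) (mu w * ((pr mu (yg y g) (yg y g w) * pr m g (g w) / pr mu g (g w))
    / Aa y g mu w)) by exact: h.
lra.
Qed.

Lemma Superadd m1 m2 : (forall w, 0 <= m1 w) -> (forall w, 0 <= m2 w) ->
  Jc y g m1 + Jc y g m2 <= Jc y g (fun w => m1 w + m2 w).
Proof.
move=> h1 h2; set mu := fun w => m1 w + m2 w.
have hm : forall w, 0 <= mu w by move=> w; rewrite /mu; have := h1 w; have := h2 w; lra.
have := @SA_one m1 mu h1 (fun w => ltac:(rewrite /mu; have := h2 w; lra)).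
have := @SA_one m2 mu h2 (fun w => ltac:(rewrite /mu; have := h1 w; lra)).
have eJ : Jc y g mu = \big[Rplus/R0]_(w : W) (m1 w * ln (Bb g mu w / Aa y g mu w)) +
    \big[Rplus/R0]_(w : W) (m2 w * ln (Bb g mu w / Aa y g mu w)).
  by rewrite /Jc -sum_add_mu.
set G1 := \big[Rplus/R0]_(w : W) (mu w * (_ / Aa y g mu w)).
set G2 := \big[Rplus/R0]_(w : W) (mu w * (_ / Aa y g mu w)).
have eS : \big[Rplus/R0]_(w : W) mu w = \big[Rplus/R0]_(w : W) m1 w + \big[Rplus/R0]_(w : W) m2 w.
  exact: big_split.
have hG : G1 + G2 <= \big[Rplus/R0]_(w : W) mu w.
  rewrite /G1 /G2 -sum_mu_add.
  have -> : \big[Rplus/R0]_(w : W) mu w = \big[Rplus/R0]_(w : W) (mu w * 1).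
    by apply: eq_bigr => w _; ring.
  apply: sum_mu_le => // w p.
  have a := Aa_pos y g hm p; have b := Bb_pos y g hm p.
  have eb : pr mu g (g w) = pr m1 g (g w) + pr m2 g (g w) by exact: prob_add.
  rewrite /Aa /Bb in a b *.
  rewrite eb in b *.
  have -> : forall aa c d : R, 0 < aa -> 0 < c + d ->
     aa * d / (c + d) / aa + aa * c / (c + d) / aa = 1.
    by move=> aa c d ? ?; field; split; lra.
  - lra.
  - done.
  - done.
lra.
Qed.

End Mix.

Lemma ln_id5 A B Am Bm c : 0 < A -> 0 < B -> 0 < Am -> 0 < Bm -> 0 < c ->
  ln (B / A) = ln (Bm / Am) + ln (Am / A) + ln (c * B / Bm) + ln (/ c).
Proof.
move=> *; rewrite !ln_div //; try by apply: Rmult_lt_0_compat.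
rewrite ln_mult // ln_Rinv //; ring.
Qed.

Lemma ln_le0 x : 0 < x -> x <= 1 -> ln x <= 0.
Proof. move=> *; rewrite -ln_1; exact: ln_le_mono. Qed.

Section Mix2.
Variables (W : finType) (Y G : eqType) (y : W -> Y) (g : W -> G).
Implicit Types mu nu m : W -> R.

Lemma SB_one m P c : (forall w, 0 <= m w) -> (forall w, m w <= P w) -> 0 < c ->
  \big[Rplus/R0]_(w : W) (m w * ln (Bb g P w / Aa y g P w)) <=
  Jc y g m + c * \big[Rplus/R0]_(w : W) P w - \big[Rplus/R0]_(w : W) m w
   + ln (/ c) * \big[Rplus/R0]_(w : W) m w.
Proof.
move=> h0 hle c0.
have hP : forall w, 0 <= P w by move=> w; have := h0 w; have := hle w; lra.
apply: (Rle_trans _ (\big[Rplus/R0]_(w : W) (m w * (ln (Bb g m w / Aa y g m w) +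
   (c * (Bb g P w / Bb g m w) + (ln (/ c) - 1)))))).
  apply: sum_mu_le => // w p.
  have am := Aa_pos y g h0 p; have bm := Bb_pos y g h0 p.
  have p' : 0 < P w by have := hle w; lra.
  have a := Aa_pos y g hP p'; have b := Bb_pos y g hP p'.
  rewrite (@ln_id5 (Aa y g P w) (Bb g P w) (Aa y g m w) (Bb g m w) c) //.
  have : ln (Aa y g m w / Aa y g P w) <= 0.
    apply: ln_le0; first by apply: Rdiv_lt_0_compat.
    apply: (Rmult_le_reg_r (Aa y g P w)) => //.
    rewrite /Rdiv Rmult_assoc Rinv_l; last lra.
    by have := Aa_mono y g w h0 hle; rewrite Rmult_1_r Rmult_1_l.
  have r0 : 0 < c * Bb g P w / Bb g m w.
    by apply: Rdiv_lt_0_compat => //; apply: Rmult_lt_0_compat.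
  have := ln_le_sub1 r0.
  have -> : c * Bb g P w / Bb g m w = c * (Bb g P w / Bb g m w) by rewrite /Rdiv; ring.
  lra.
rewrite !sum_mu_add sum_mu_scale !sum_mu_c.
have := @G1 _ m P _ g hP.
have -> : \big[Rplus/R0]_(w : W) (m w * (pr P g (g w) / pr m g (g w))) =
  \big[Rplus/R0]_(w : W) (m w * (Bb g P w / Bb g m w)) by [].
move=> h.
rewrite /Jc.
have : c * \big[Rplus/R0]_(w : W) (m w * (Bb g P w / Bb g m w)) <= c * \big[Rplus/R0]_(w : W) P w.
  by apply: Rmult_le_compat_l; lra.
lra.
Qed.

Lemma Subadd M S eps : (forall w, 0 <= M w) -> (forall w, 0 <= S w) -> 0 < eps ->
  Jc y g (fun w => M w + S w) <= Jc y g M + Jc y g S +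
    (\big[Rplus/R0]_(w : W) (M w + S w) - \big[Rplus/R0]_(w : W) M w) +
    (eps * \big[Rplus/R0]_(w : W) (M w + S w) - \big[Rplus/R0]_(w : W) S w
     + \big[Rplus/R0]_(w : W) S w * ln (/ eps)).
Proof.
move=> hM hS e0; set P := fun w => M w + S w.
have h1 : forall w, M w <= P w by move=> w; rewrite /P; have := hS w; lra.
have h2 : forall w, S w <= P w by move=> w; rewrite /P; have := hM w; lra.
have := @SB_one M P 1 hM h1 Rlt_0_1.
have := @SB_one S P eps hS h2 e0.
rewrite Rinv_1 ln_1.
have -> : Jc y g P = \big[Rplus/R0]_(w : W) (M w * ln (Bb g P w / Aa y g P w)) +
    \big[Rplus/R0]_(w : W) (S w * ln (Bb g P w / Aa y g P w)).
  by rewrite /Jc -sum_add_mu.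
rewrite /P => hA hB; lra.
Qed.

End Mix2.

Lemma real_ii p0 p1 : 0 <= p0 -> 0 <= p1 -> 0 < p0 + p1 ->
  (p0 * (2 * p0 / (p0 + p1)) + p1 * (2 * p1 / (p0 + p1))) / (p0 + p1) <=
  3 - 4 * sqrt (p0 / (p0 + p1) * (p1 / (p0 + p1))).
Proof.
move=> h0 h1 hs.
set x := p0 / (p0 + p1); set z := p1 / (p0 + p1).
have hx : 0 <= x by apply: Rmult_le_pos => //; apply: Rinv_ge0; lra.
have hz : 0 <= z by apply: Rmult_le_pos => //; apply: Rinv_ge0; lra.
have sum1 : x + z = 1 by rewrite /x /z; field; lra.
have -> : (p0 * (2 * p0 / (p0 + p1)) + p1 * (2 * p1 / (p0 + p1))) / (p0 + p1) =
   2 * (x * x) + 2 * (z * z) by rewrite /x /z; field; lra.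
have hxz : 0 <= x * z by apply: Rmult_le_pos.
have s2 := sqrt_sqrt _ hxz; have s0 := sqrt_pos (x * z).
clearbody x z.
have e2 : 2 * (x * x) + 2 * (z * z) = 2 - 4 * (x * z).
  have -> : z = 1 - x by lra. ring.
rewrite e2; set s := sqrt (x * z) in s2 s0 *.
have := pow2_ge_0 (2 * s - 1); nra.
Qed.

Section StepSec.
Variables (W : finType) (F C : eqType) (mu : W -> R) (b : W -> bool) (f : W -> F) (c : W -> C).
Hypothesis h0 : forall w, 0 <= mu w.
Hypothesis fc : forall v w, f v = f w -> c v = c w.

Lemma pr_split (K : eqType) (k : W -> K) x :
  pr mu k x = prob mu (fun v => (b v == false) && (k v == x)) +
              prob mu (fun v => (b v == true) && (k v == x)).
Proof.
rewrite -[X in _ = X + _]Rmult_1_r -[X in _ = _ + X]Rmult_1_r.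
rewrite -(SplitBool mu b k x (fun _ => 1)) /pr /prob [LHS]big_mkcond.
by apply: eq_bigr => v _; case: ifP => _; ring.
Qed.

Lemma pr_pair (K : eqType) (k : W -> K) be x :
  pr mu (fun v => (b v, k v)) (be, x) = prob mu (fun v => (b v == be) && (k v == x)).
Proof. by []. Qed.

Let bf := fun v => (b v, f v).
Let bc := fun v => (b v, c v).

Lemma step_ii :
  \big[Rplus/R0]_(w : W) (mu w * (2 * pr mu bf (bf w) / pr mu f (f w))) <=
  3 * \big[Rplus/R0]_(w : W) mu w - 2 * Bhatt mu b f.
Proof.
rewrite (Tower h0 f).
under eq_bigr => w _ do rewrite /Rdiv Rmult_assoc.
pose p0 x := prob mu (fun v => (b v == false) && (f v == x)).
pose p1 x := prob mu (fun v => (b v == true) && (f v == x)).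
apply: (Rle_trans _ (\big[Rplus/R0]_(w : W) (mu w * ((p0 (f w) * (2 * p0 (f w) / pr mu f (f w))
   + p1 (f w) * (2 * p1 (f w) / pr mu f (f w))) / pr mu f (f w))))).
  apply: Req_le; apply: eq_bigr => w _; congr (_ * (_ * _)).
  rewrite -(SplitBool mu b f (f w) (fun be => 2 * prob mu (fun v => (b v == be) && (f v == f w))
      / pr mu f (f w))).
  by apply: eq_bigr => v _; case: eqP => // e; rewrite /bf /Rdiv e.
rewrite Bhatt_eq.
apply: (Rle_trans _ (\big[Rplus/R0]_(w : W) (mu w * (3 + (-4) * sqrt (p0 (f w) / pr mu f (f w) *
           (p1 (f w) / pr mu f (f w))))))).
  apply: sum_mu_le => // w p.
  have e := pr_split f (f w); rewrite -/(p0 (f w)) -/(p1 (f w)) in e.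
  rewrite e; have := @real_ii (p0 (f w)) (p1 (f w)).
  have q0 : 0 <= p0 (f w) by exact: prob_ge0.
  have q1 : 0 <= p1 (f w) by exact: prob_ge0.
  have q2 : 0 < p0 (f w) + p1 (f w) by have := mu_le_pr h0 f w; lra.
  move=> /(_ q0 q1 q2); lra.
rewrite sum_mu_add sum_mu_c sum_mu_scale /p0 /p1; apply: Req_le; ring.
Qed.

Lemma step_i :
  \big[Rplus/R0]_(w : W) (mu w * (pr mu bc (bc w) * pr mu f (f w) /
        (pr mu c (c w) * pr mu bf (bf w)))) <= \big[Rplus/R0]_(w : W) mu w.
Proof.
rewrite (Tower h0 f).
under eq_bigr => w _ do rewrite /Rdiv Rmult_assoc.
have -> : \big[Rplus/R0]_(w : W) mu w = \big[Rplus/R0]_(w : W) (mu w * 1)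
  by apply: eq_bigr => w _; ring.
apply: sum_mu_le => // w p.
have pf0 : 0 < pr mu f (f w) by have := mu_le_pr h0 f w; lra.
have pc0 : 0 < pr mu c (c w) by have := mu_le_pr h0 c w; lra.
rewrite (eq_bigr (fun v => if f v == f w then mu v *
   ((fun be => pr mu bc (be, c w) * pr mu f (f w) / (pr mu c (c w) * pr mu bf (be, f w))) (b v))
   else R0)); last first.
  move=> v _; case: eqP => // e; by rewrite /bc /bf e (fc e).
rewrite (SplitBool mu b f (f w) (fun be => pr mu bc (be, c w) * pr mu f (f w) /
   (pr mu c (c w) * pr mu bf (be, f w)))).
apply: (Rle_trans _ ((pr mu bc (false, c w) + pr mu bc (true, c w)) * pr mu f (f w) /
   pr mu c (c w) / pr mu f (f w))).
  rewrite /Rdiv; apply: Rmult_le_compat_r; first by apply: Rlt_le; apply: Rinv_0_lt_compat.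
  have key : forall be, prob mu (fun v => (b v == be) && (f v == f w)) *
     (pr mu bc (be, c w) * pr mu f (f w) * / (pr mu c (c w) * pr mu bf (be, f w))) <=
     pr mu bc (be, c w) * pr mu f (f w) * / pr mu c (c w).
    move=> be; rewrite -pr_pair -/bf.
    have q0 := pr_ge0 h0 bf (be, f w); have q1 := pr_ge0 h0 bc (be, c w).
    case: (Req_EM_T (pr mu bf (be, f w)) 0) => [->|ne].
      rewrite Rmult_0_l; apply: Rmult_le_pos; first by apply: Rmult_le_pos; lra.
      by apply: Rlt_le; apply: Rinv_0_lt_compat.
    rewrite Rinv_mult; field_simplify; lra.
  rewrite !Rmult_plus_distr_r; apply: Rplus_le_compat; [exact: key false | exact: key true].
have e := pr_split c (c w).
rewrite !pr_pair -e; apply: Req_le; field; lra.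
Qed.

Lemma Step :
  \big[Rplus/R0]_(w : W) (mu w * ln (2 * pr mu bc (bc w) / pr mu c (c w))) <=
  2 * (\big[Rplus/R0]_(w : W) mu w - Bhatt mu b f).
Proof.
apply: (Rle_trans _ (\big[Rplus/R0]_(w : W) (mu w * (
   (pr mu bc (bc w) * pr mu f (f w) / (pr mu c (c w) * pr mu bf (bf w))) +
   (2 * pr mu bf (bf w) / pr mu f (f w)) + (-2))))).
  apply: sum_mu_le => // w p.
  have a1 : 0 < pr mu bc (bc w) by have := mu_le_pr h0 bc w; lra.
  have a2 : 0 < pr mu bf (bf w) by have := mu_le_pr h0 bf w; lra.
  have a3 : 0 < pr mu f (f w) by have := mu_le_pr h0 f w; lra.
  have a4 : 0 < pr mu c (c w) by have := mu_le_pr h0 c w; lra.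
  have r1 : 0 < pr mu bc (bc w) * pr mu f (f w) / (pr mu c (c w) * pr mu bf (bf w)).
    by apply: Rdiv_lt_0_compat; apply: Rmult_lt_0_compat.
  have r2 : 0 < 2 * pr mu bf (bf w) / pr mu f (f w).
    by apply: Rdiv_lt_0_compat => //; lra.
  have := ln_le_sub1 r1; have := ln_le_sub1 r2.
  have -> : ln (2 * pr mu bc (bc w) / pr mu c (c w)) =
    ln (pr mu bc (bc w) * pr mu f (f w) / (pr mu c (c w) * pr mu bf (bf w))) +
    ln (2 * pr mu bf (bf w) / pr mu f (f w)).
    rewrite !ln_div //; try (by apply: Rmult_lt_0_compat); try lra.
    rewrite !ln_mult //; try lra; ring.
  lra.
rewrite !sum_mu_add sum_mu_c.
have := step_i; have := step_ii; lra.
Qed.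

End StepSec.

Lemma map_eqE (T : Type) (U : eqType) (f1 f2 : T -> U) (s : seq T) :
  (map f1 s == map f2 s) = all (fun j => f1 j == f2 j) s.
Proof. by elim: s => //= a s IH; rewrite eqseq_cons IH. Qed.

Section Spec.
Variables (n : nat) (X Z : finType).
Local Notation W := (Omega n X Z).
Local Notation N := (2 ^ n)%N.

Lemma Tsub_eq (S : {set 'I_N}) (v w : W) :
  (Tsub S v == Tsub S w) = [forall j in S, Tseq v j == Tseq w j].
Proof.
rewrite /Tsub map_eqE; apply/allP/forall_inP => h j; first by move=> jS; apply: h; rewrite mem_enum.
by rewrite mem_enum => jS; apply: h.
Qed.

Lemma Tpast_eq (i : 'I_N) (v w : W) :
  (Tpast i v == Tpast i w) = [forall j : 'I_N, (j < i)%N ==> (Tseq v j == Tseq w j)].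
Proof.
rewrite /Tpast map_eqE; apply/allP/forallP => h j.
  by apply/implyP => ji; apply: h; rewrite mem_filter ji mem_enum.
by rewrite mem_filter => /andP[ji _]; move/implyP: (h j); apply.
Qed.

Lemma size_Tsub (S : {set 'I_N}) (w : W) : size (Tsub S w) = #|S|.
Proof. by rewrite /Tsub size_map cardE. Qed.

Definition St (I : {set 'I_N}) (t : nat) : {set 'I_N} := [set j in I | (j < t)%N].

Definition kap (S : {set 'I_N}) (w : W) := (Tsub S w, Useq w, Zseq w).

Lemma kap_eq (S : {set 'I_N}) (v w : W) :
  (kap S v == kap S w) = [&& [forall j in S, Tseq v j == Tseq w j], Useq v == Useq w & Zseq v == Zseq w].
Proof. by rewrite /kap !xpair_eqE Tsub_eq andbA. Qed.

Lemma St_succ_in (I : {set 'I_N}) (i : 'I_N) (E : 'I_N -> bool) : i \in I ->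
  [forall j in St I i.+1, E j] = E i && [forall j in St I i, E j].
Proof.
move=> iI; apply/forall_inP/andP.
  move=> h; split; first by apply: h; rewrite inE iI /=.
  by apply/forall_inP => j; rewrite inE => /andP[jI ji]; apply: h; rewrite inE jI ltnS ltnW.
case=> Ei /forall_inP h j; rewrite inE => /andP[jI]; rewrite ltnS leq_eqVlt => /orP[/eqP e|ji].
  by have -> : j = i by apply: val_inj.
by apply: h; rewrite inE jI.
Qed.

Lemma St_succ_out (I : {set 'I_N}) (t : nat) :
  (forall i : 'I_N, nat_of_ord i = t -> i \notin I) -> St I t.+1 = St I t.
Proof.
move=> h; apply/setP => j; rewrite !inE ltnS leq_eqVlt.
case: eqP => [e|_] //=; have := h j e; by case: (j \in I).
Qed.

Lemma St0 (I : {set 'I_N}) : St I 0 = set0.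
Proof. by apply/setP => j; rewrite !inE andbF. Qed.

Lemma StN (I : {set 'I_N}) : St I N = I.
Proof. by apply/setP => j; rewrite !inE ltn_ord andbT. Qed.

End Spec.

Lemma ln_chain s a' a a0 : 0 < a' -> 0 < a -> 0 < a0 ->
  ln (2 ^ s.+1 * a' / a0) = ln (2 ^ s * a / a0) + ln (2 * a' / a).
Proof.
move=> h1 h2 h3; have h4 := pow2_pos s.
have h5 : 0 < 2 ^ s.+1 by apply: pow2_pos.
rewrite !ln_div //; try (apply: Rmult_lt_0_compat => //; lra).
rewrite /= !ln_mult //; try lra.
Qed.

Section Chain.
Variables (n : nat) (X Z : finType).
Local Notation W := (Omega n X Z).
Local Notation N := (2 ^ n)%N.
Variables (P : W -> R) (I : {set 'I_N}) (Bd : R).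
Hypothesis P0 : forall w, 0 <= P w.
Hypothesis HB : forall i, i \in I ->
  2 * (\big[Rplus/R0]_(w : W) P w -
       Bhatt P (fun w => Tseq w i) (fun w => (Tpast i w, Useq w, Zseq w))) <= Bd.

Definition Dt t := \big[Rplus/R0]_(w : W) (P w *
   ln (2 ^ #|St I t| * pr P (kap (St I t)) (kap (St I t) w) /
       pr P (kap (St I 0)) (kap (St I 0) w))).

Lemma St_succ_set (i : 'I_N) : i \in I -> St I i.+1 = i |: St I i.
Proof.
move=> iI; apply/setP => j; rewrite !inE ltnS leq_eqVlt.
case: (j =P i) => [->|ne]; first by rewrite eqxx iI.
have -> : (nat_of_ord j == nat_of_ord i) = false by apply/eqP => e; apply: ne; apply: val_inj.
done.
Qed.

Lemma Chain t : Dt t <= INR #|St I t| * Bd.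
Proof.
elim: t => [|t IH].
  rewrite /Dt St0 cards0 /= Rmult_0_l.
  apply: (Rle_trans _ (\big[Rplus/R0]_(w : W) (P w * 0))).
    apply: sum_mu_le => // w p.
    have := mu_le_pr P0 (kap set0) w => h.
    rewrite Rmult_1_l /Rdiv Rinv_r ?ln_1; lra.
  by rewrite sum_mu_c; lra.
case: (ltnP t N) => [lt|ge]; last first.
  rewrite /Dt St_succ_out; first exact: IH.
  by move=> i e; have := ltn_ord i; rewrite e ltnNge ge.
pose i := Ordinal lt.
case iI : (i \in I); last first.
  rewrite /Dt St_succ_out; first exact: IH.
  move=> j e; have -> : j = i by apply: val_inj.
  by rewrite iI.
have ti : t = nat_of_ord i by [].
rewrite ti in IH *.
pose b := fun w : W => Tseq w i.
pose f := fun w : W => (Tpast i w, Useq w, Zseq w).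
pose c := fun w : W => kap (St I i) w.
have fc : forall v w, f v = f w -> c v = c w.
  move=> v w [e1 e2 e3]; apply/eqP; rewrite /c kap_eq e2 e3 !eqxx !andbT.
  move/eqP: e1; rewrite Tpast_eq => /forallP h.
  apply/forall_inP => j; rewrite inE => /andP[_ ji]; exact: (implyP (h j) ji).
have hS := @Step W _ _ P b f c P0 fc.
have epr : forall w, pr P (kap (St I i.+1)) (kap (St I i.+1) w) =
   pr P (fun v => (b v, c v)) (b w, c w).
  move=> w; apply: eq_bigl => v /=.
  rewrite (kap_eq (St I t.+1) v w) (St_succ_in _ iI) /b /c.
  rewrite -[(_, _) == _]/(_ && _) (kap_eq (St I i) v w) /=; by rewrite !andbA.
have ecard : #|St I i.+1| = #|St I i|.+1.
  by rewrite St_succ_set // cardsU1 !inE ltnn andbF.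
apply: (Rle_trans _ (Dt i + \big[Rplus/R0]_(w : W) (P w * ln (2 * pr P (fun v => (b v, c v)) (b w, c w) /
      pr P c (c w))))).
  rewrite /Dt -sum_mu_add; apply: sum_mu_le => // w p.
  rewrite epr ecard.
  have a1 : 0 < pr P (fun v => (b v, c v)) (b w, c w).
    by have := mu_le_pr P0 (fun v => (b v, c v)) w; lra.
  have a2 : 0 < pr P c (c w) by have := mu_le_pr P0 c w; lra.
  have a3 : 0 < pr P (kap (St I 0)) (kap (St I 0) w) by have := mu_le_pr P0 (kap (St I 0)) w; lra.
  have a4 := pow2_pos #|St I i|.
  apply: Req_le.
  exact: ln_chain.
rewrite ecard S_INR.
have h2 : \big[Rplus/R0]_(w : W) (P w * ln (2 * pr P (fun v => (b v, c v)) (b w, c w) /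
      pr P c (c w))) <= Bd by apply: Rle_trans (HB iI); exact hS.
rewrite Rmult_plus_distr_r Rmult_1_l; lra.
Qed.

End Chain.

Lemma ln2_bounds : / 2 < ln 2 < 1.
Proof.
split; first exact: ln_lt_2.
have := exp_ineq1 1 (ltac:(lra)); move=> h.
rewrite -(ln_exp 1); apply: ln_increasing; lra.
Qed.

Lemma delta_facts n beta : 0 < beta < 1 / 2 ->
  1 <= INR (2 ^ n) /\ 0 < deltaN n beta /\ deltaN n beta <= 1 /\
  ln (/ deltaN n beta) <= INR (2 ^ n) * ln 2.
Proof.
move=> hb.
have N1 : 1 <= INR (2 ^ n).
  have := expn_gt0 2 n; move=> /leP /le_INR; rewrite /=; lra.
have xp : 0 < Rpower (INR (2 ^ n)) beta by rewrite /Rpower; apply: exp_pos.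
have dpos : 0 < deltaN n beta by rewrite /deltaN /Rpower; apply: exp_pos.
split=> //; split=> //; split.
  rewrite /deltaN -(@Rpower_O 2); last lra.
  apply: Rle_Rpower; lra.
rewrite ln_Rinv // /deltaN ln_Rpower.
have : Rpower (INR (2 ^ n)) beta <= INR (2 ^ n).
  rewrite -{2}(@Rpower_1 (INR (2 ^ n))); last lra.
  apply: Rle_Rpower; lra.
have := ln2_bounds; nra.
Qed.

Lemma iid_ge0 n (X Z : finType) (P0 : (bool * bool * X * Z)%type -> R) :
  (forall x, 0 <= P0 x) -> forall w, 0 <= iid (n := n) P0 w.
Proof.
move=> h w; rewrite /iid; apply: (big_ind (fun x => 0 <= x)); [lra | | move=> *; exact: h].
by move=> *; apply: Rmult_le_pos.
Qed.

Section Cells2.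
Variables (n : nat) (X Z : finType).
Local Notation W := (Omega n X Z).
Local Notation N := (2 ^ n)%N.

Lemma cellI (I A : {set 'I_N}) (v w : W) : A \subset I ->
  ((Tsub (I :\: A) v == Tsub (I :\: A) w) && (kap A v == kap A w)) = (kap I v == kap I w).
Proof.
move=> sAI; rewrite Tsub_eq !kap_eq !andbA; congr (_ && _ && _).
apply/andP/forall_inP.
  case=> /forall_inP h1 /forall_inP h2 j jI.
  by case jA: (j \in A); [apply: h2 | apply: h1; rewrite inE jA].
move=> h; split; apply/forall_inP => j.
  by rewrite inE => /andP[_ jI]; apply: h.
by move=> jA; apply: h; apply: (subsetP sAI).
Qed.

Lemma cell0 (I A : {set 'I_N}) (v w : W) :
  ((Tsub A v == Tsub A w) && (kap (St I 0) v == kap (St I 0) w)) = (kap A v == kap A w).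
Proof.
rewrite Tsub_eq !kap_eq St0 !andbA; congr (_ && _ && _).
have -> : [forall j in set0, Tseq v j == Tseq w j] = true.
  by apply/forall_inP => j; rewrite inE.
by rewrite andbT.
Qed.

End Cells2.

Lemma sum_mu_sub (W : finType) (mu F H : W -> R) :
  \big[Rplus/R0]_(w : W) (mu w * (F w - H w)) =
  \big[Rplus/R0]_(w : W) (mu w * F w) - \big[Rplus/R0]_(w : W) (mu w * H w).
Proof.
have -> : forall a b : R, a - b = a + (-1) * b by move=> *; ring.
rewrite -sum_mu_scale -sum_mu_add; apply: eq_bigr => w _; ring.
Qed.

Lemma sumR_sub (I : Type) (r : seq I) (F G : I -> R) :
  \big[Rplus/R0]_(i <- r) (F i - G i) = \big[Rplus/R0]_(i <- r) F i - \big[Rplus/R0]_(i <- r) G i.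
Proof.
elim: r => [|a r IH]; first by rewrite !big_nil; ring.
by rewrite !big_cons IH; ring.
Qed.

Lemma ln_MI a py b : 0 < a -> 0 < py -> 0 < b ->
  ln (a / (py * b)) = ln (1 / py) - ln (b / a).
Proof.
move=> *; rewrite !ln_div //; try (apply: Rmult_lt_0_compat => //); try lra.
rewrite ln_mult // ln_1; ring.
Qed.

Lemma ln_A k2 b p0 : 0 < b -> 0 < p0 ->
  ln (2 ^ k2 * b / p0) = INR k2 * ln 2 - ln (p0 / b).
Proof.
move=> *; have := pow2_pos k2 => h.
rewrite !ln_div //; try (apply: Rmult_lt_0_compat => //).
rewrite ln_mult // ln_pow; try lra; ring.
Qed.

Lemma ln_fin k1 k2 a b p0 : 0 < a -> 0 < b -> 0 < p0 ->
  INR k1 * ln 2 - ln (b / a) = ln (2 ^ (k1 + k2) * a / p0) - ln (2 ^ k2 * b / p0).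
Proof.
move=> *; have := pow2_pos (k1 + k2); have := pow2_pos k2 => h1 h2.
rewrite !ln_div //; try (apply: Rmult_lt_0_compat => //).
rewrite !ln_mult // !ln_pow; try lra.
rewrite plus_INR; ring.
Qed.

Lemma sub_le_aux x y b : x <= b -> 0 <= y -> x - y <= b.
Proof. move=> *; lra. Qed.

Lemma fin_arith a L V : / 2 < L -> a * L <= 18 * V -> 0 <= V -> a <= 40 * V.
Proof.
move=> hL hY hV; case: (Rle_lt_dec 0 a) => hm; last lra.
have := Rmult_le_compat_l a (/ 2) L hm (Rlt_le _ _ hL); lra.
Qed.

Theorem lemma3 :
  forall m : nat, exists C : R,
  forall beta : R, (0 < beta < 1/2) ->
  exists N0 : nat,
  forall (X Z : finType), #|Z| = m ->
  forall P0 : (bool * bool * X * Z)%type -> R, is_dist P0 ->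
  forall n : nat, (N0 <= 2 ^ n)%N ->
  forall Q : Omega n X Z -> R, is_dist Q ->
  (l1dist (iid (n:=n) P0) Q <= 2 * INR (2 ^ n) * deltaN n beta) ->
  forall I A : {set 'I_(2 ^ n)},
  I \subset Hset n beta P0 -> A \subset I ->
  (MI Q (fun w => Tsub (I :\: A) w) (fun w => (Tsub A w, Useq w, Zseq w))
     <= C * INR (2 ^ n) ^ 3 * deltaN n beta).
Proof.
move=> m; exists 40 => beta hb; exists 0%N => X Z _ P0 [hP0 _] n _ Q [hQ0 hQ1] hl1 I A HI HA.
set W := Omega n X Z.
set Nn := INR (2 ^ n).
set d := deltaN n beta.
have [N1 [d0 [d1 dL]]] := delta_facts n hb.
rewrite -/Nn -/d in N1 d0 d1 dL hl1 *.
set P := iid (n:=n) P0.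
have hP : forall w, 0 <= P w by apply: iid_ge0.
set eps := 2 * Nn * d.
have e0 : 0 < eps by rewrite /eps; apply: Rmult_lt_0_compat => //; lra.
set L := ln 2.
have [L1 L2] := ln2_bounds; rewrite -/L in L1 L2.
set y := fun w : W => Tsub (I :\: A) w.
set g := fun w : W => (Tsub A w, Useq w, Zseq w).
set k := #|I :\: A|.
set M := fun w : W => Rmin (P w) (Q w).
set S := fun w : W => Q w - M w.
set S' := fun w : W => P w - M w.
have hM : forall w, 0 <= M w by move=> w; apply: Rmin_glb.
have hS : forall w, 0 <= S w by move=> w; have := Rmin_r (P w) (Q w); rewrite /S /M; lra.
have hS' : forall w, 0 <= S' w by move=> w; have := Rmin_l (P w) (Q w); rewrite /S' /M; lra.
set sP := \big[Rplus/R0]_(w : W) P w.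
set t := \big[Rplus/R0]_(w : W) S' w.
have ht0 : 0 <= t by apply: sumR_ge0.
have htl : t <= eps.
  apply: Rle_trans hl1; apply: sumR_le => w _; rewrite /S' /M.
  apply: (Rmin_case_strong (P w) (Q w) (fun r => P w - r <= Rabs (P w - Q w))) => _.
    by have := Rabs_pos (P w - Q w); lra.
  exact: Rle_abs.
have eQ1 : \big[Rplus/R0]_(w : W) Q w = 1 by rewrite hQ1.
have hsP1 : sP - 1 <= eps.
  rewrite -eQ1 /sP -sumR_sub; apply: Rle_trans hl1; apply: sumR_le => w _; exact: Rle_abs.
have hsP2 : 1 - sP <= eps.
  rewrite -eQ1 /sP -sumR_sub; apply: Rle_trans hl1; apply: sumR_le => w _.
  rewrite Rabs_minus_sym; exact: Rle_abs.
have kN : INR k <= Nn.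
  rewrite /Nn; apply: le_INR; apply/leP; rewrite /k.
  by have := max_card (mem (I :\: A)); rewrite card_ord.
have IN : INR #|I| <= Nn.
  rewrite /Nn; apply: le_INR; apply/leP.
  by have := max_card (mem I); rewrite card_ord.
have stA : MI Q y g * L <= Jc y (fun _ => tt) Q - Jc y g Q.
  rewrite MI_eq sumR_distrl /Jc -sum_mu_sub.
  apply: sumR_le => w _.
  case: (hQ0 w) => [p|<-]; last by rewrite !Rmult_0_l; lra.
  have eA : Aa y g Q w = prob Q (fun v => (y v == y w) && (g v == g w)) by [].
  have eB : Bb g Q w = prob Q (fun v => g v == g w) by [].
  have eB1 : Bb (fun _ : W => tt) Q w = 1.
    by rewrite -eQ1 /Bb /pr /prob; apply: eq_bigl.
  have eA1 : Aa y (fun _ : W => tt) Q w = prob Q (fun v => y v == y w).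
    by rewrite /Aa /pr /prob; apply: eq_bigl => v; rewrite /yg -[(_, _) == _]/(_ && _) /= andbT.
  rewrite eA eB eB1 eA1.
  have a0 : 0 < prob Q (fun v => (y v == y w) && (g v == g w)).
    by have := mu_le_prob hQ0 (E := fun v => (y v == y w) && (g v == g w)) (w := w) (ltac:(by rewrite /= !eqxx)); lra.
  have a1 : 0 < prob Q (fun v => y v == y w).
    by have := mu_le_prob hQ0 (E := fun v => y v == y w) (w := w) (ltac:(by rewrite /= !eqxx)); lra.
  have a2 : 0 < prob Q (fun v => g v == g w).
    by have := mu_le_prob hQ0 (E := fun v => g v == g w) (w := w) (ltac:(by rewrite /= !eqxx)); lra.
  apply: Req_le; rewrite Rmult_assoc; congr (_ * _).
  have Lne : ln 2 <> 0 by have := ln2_bounds; lra.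
  rewrite /log2 /L /Rdiv Rmult_assoc Rinv_l // Rmult_1_r -!/(Rdiv _ _).
  exact: ln_MI.
have stB : Jc y (fun _ => tt) Q <= INR k * L * 1.
  rewrite -eQ1; exact: (Jc_count (fun _ : W => tt) hQ0 (fun w => size_Tsub (I :\: A) w)).
have stC : Jc y g M <= Jc y g Q.
  have eQ : (fun w => M w + S w) = Q.
    by apply: functional_extensionality => w; rewrite /S; ring.
  have := Superadd y g hM hS; rewrite eQ; have := Jc_ge0 y g hS; lra.
have stD : Jc y g P <= Jc y g M + Jc y g S' + t + (eps * sP - t + t * ln (/ eps)).
  have eP : (fun w => M w + S' w) = P.
    by apply: functional_extensionality => w; rewrite /S'; ring.
  have := Subadd y g hM hS' e0; rewrite eP.
  have eSP : \big[Rplus/R0]_(w : W) (M w + S' w) = sP.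
    by apply: eq_bigr => w _; rewrite /S'; ring.
  have eSM : \big[Rplus/R0]_(w : W) (M w + S' w) = \big[Rplus/R0]_(w : W) M w + t.
    exact: big_split.
  rewrite eSM -eSP eSM Rmult_comm -/t; lra.
have stE : Jc y g S' <= INR k * L * t.
  exact: (Jc_count g hS' (fun w => size_Tsub (I :\: A) w)).
have stF : INR k * L * sP - Jc y g P <= INR #|I| * (2 * (sP - (1 - d))).
  have HB : forall i, i \in I ->
    2 * (\big[Rplus/R0]_(w : W) P w -
       Bhatt P (fun w => Tseq w i) (fun w => (Tpast i w, Useq w, Zseq w))) <=
    2 * (sP - (1 - d)).
    move=> i iI; have := subsetP HI i iI; rewrite inE.
    case: Rle_dec => // h _; rewrite -/sP.
    apply: Rmult_le_compat_l; first lra; apply: Rplus_le_compat_l; apply: Ropp_le_contravar.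
    exact: h.
  have hch := Chain hP HB (2 ^ n).
  rewrite /Dt StN in hch.
  have hp0 : forall w, 0 < P w -> 0 < pr P (kap (St I 0)) (kap (St I 0) w) by move=> w p; have := mu_le_pr hP (kap (St I 0)) w; lra.
  have cardI : #|I| = (k + #|A|)%N.
    by rewrite /k cardsD (setIidPr HA) subnK // subset_leq_card.
  have hAs : 0 <= \big[Rplus/R0]_(w : W) (P w *
       ln (2 ^ #|A| * pr P (kap A) (kap A w) / pr P (kap (St I 0)) (kap (St I 0) w))).
    have hc := Jc_count (kap (St I 0)) hP (fun w => size_Tsub A w).
    apply: (Rle_trans _ (\big[Rplus/R0]_(w : W) (P w * (INR #|A| * ln 2 -
        ln (Bb (kap (St I 0)) P w / Aa (Tsub A) (kap (St I 0)) P w))))); last first.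
      apply: sum_mu_le => // w p.
      have eA : Aa (Tsub A) (kap (St I 0)) P w = pr P (kap A) (kap A w).
        rewrite /Aa /pr /prob; apply: eq_bigl => v.
        by rewrite /yg -[(_, _) == _]/(_ && _) cell0.
      rewrite eA; have := mu_le_pr hP (kap A) w => q.
      apply: Req_le; rewrite ln_A; [by [] | lra | exact: hp0 w p].
    rewrite sum_mu_sub sum_mu_c; rewrite /Jc in hc.
    apply: Rge_le; apply: Rge_minus; apply: Rle_ge; exact: hc.
  apply: (Rle_trans _ (\big[Rplus/R0]_(w : W) (P w *
     (ln (2 ^ #|I| * pr P (kap I) (kap I w) / pr P (kap (St I 0)) (kap (St I 0) w)) - ln (2 ^ #|A| * pr P (kap A) (kap A w) / pr P (kap (St I 0)) (kap (St I 0) w)))))).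
    rewrite /Jc -sum_mu_c -sum_mu_sub; apply: sum_mu_le => // w p.
    have eA : Aa y g P w = pr P (kap I) (kap I w).
      rewrite /Aa /pr /prob; apply: eq_bigl => v.
      by rewrite /yg -[(_, _) == _]/(_ && _) cellI.
    have eB : Bb g P w = pr P (kap A) (kap A w) by [].
    rewrite eA eB cardI.
    have := mu_le_pr hP (kap A) w; have := mu_le_pr hP (kap I) w; have := hp0 w p => q1 q2 q3.
    apply: Req_le; apply: ln_fin; lra.
  rewrite sum_mu_sub; exact: (sub_le_aux hch hAs).
have lnE : t * ln (/ eps) <= t * (Nn * L).
  apply: Rmult_le_compat_l => //; apply: Rle_trans dL.
  apply: ln_le_mono; first by apply: Rinv_0_lt_compat.
  apply: Rinv_le_contravar => //; rewrite /eps; nra.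
have h1 : MI Q y g * L <= INR k * L - Jc y g P + INR k * L * t + eps * sP + t * ln (/ eps).
  lra.
have h2 : INR k * L - Jc y g P <= INR #|I| * (2 * (sP - (1 - d))) + INR k * L * (1 - sP).
  lra.
have k0 : 0 <= INR k by apply: pos_INR.
have I0 : 0 <= INR #|I| by apply: pos_INR.
have b1 : INR #|I| * (2 * (sP - (1 - d))) <= Nn * (2 * (eps + d)).
  apply: (Rle_trans _ (INR #|I| * (2 * (eps + d)))).
    apply: Rmult_le_compat_l => //; lra.
  apply: Rmult_le_compat_r => //; lra.
have kL : INR k * L <= Nn by nra.
have kL0 : 0 <= INR k * L by nra.
have b2 : INR k * L * (1 - sP) <= Nn * eps.
  apply: (Rle_trans _ (INR k * L * eps)); first by apply: Rmult_le_compat_l.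
  apply: Rmult_le_compat_r => //; lra.
have b3 : INR k * L * t <= Nn * eps.
  apply: (Rle_trans _ (INR k * L * eps)); first by apply: Rmult_le_compat_l.
  apply: Rmult_le_compat_r => //; lra.
have b4 : eps * sP <= eps * (1 + eps) by apply: Rmult_le_compat_l; lra.
have b5 : t * (Nn * L) <= eps * Nn.
  apply: (Rle_trans _ (eps * (Nn * L))).
    apply: Rmult_le_compat_r => //; apply: Rmult_le_pos; lra.
  apply: Rmult_le_compat_l; first lra.
  have := Rmult_le_compat_l Nn L 1 ltac:(lra) ltac:(lra); lra.
have hY : MI Q y g * L <= 18 * Nn ^ 3 * d.
  have : MI Q y g * L <= 2 * Nn * d + 5 * Nn * eps + eps + eps * eps.
    have := Rmult_le_compat_l eps _ _ (Rlt_le _ _ e0) b4; nra.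
  rewrite /eps.
  have n2 : Nn <= Nn ^ 3 by simpl; nra.
  have n3 : Nn * Nn <= Nn ^ 3 by simpl; nra.
  nra.
have hY0 : 0 <= 18 * Nn ^ 3 * d.
  apply: Rmult_le_pos; last lra; apply: Rmult_le_pos; first lra.
  apply: pow_le; lra.
have hq : 0 <= Nn ^ 3 * d by apply: Rmult_le_pos; [apply: pow_le| ]; lra.
have e18 : 18 * Nn ^ 3 * d = 18 * (Nn ^ 3 * d) by ring.
have e40 : 40 * Nn ^ 3 * d = 40 * (Nn ^ 3 * d) by ring.
rewrite e18 in hY; rewrite e40.
exact: (fin_arith L1 hY hq).
Qed.
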